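(* Let $G$ be a finitely generated group. Suppose there exist constants $\alpha,\beta>0$ such that every finite symmetric generating set $U$ of $G$ satisfies $|U^n|\geqslant(\alpha|U|)^{\beta n}$ for every $n\in\mathbb{N}$. Then either $G$ is finite with $|G|\leqslant1/\alpha$, or $G$ has uniform exponential growth.
   Context: For a finite generating set $S$, $B_S(n)$ is the ball of radius $n$ about the identity in the word metric of $S$, $\omega(G,S)=\lim_{n\to\infty}|B_S(n)|^{1/n}$, and $\omega(G)=\inf_S\omega(G,S)$ over finite generating sets; $G$ has uniform exponential growth if $\omega(G)>1$. $U^n=\{u_1\cdots u_n:u_i\in U\}$. *)

(* Defs.v *)
From HB Require Import structures.
From mathcomp Require Import all_boot all_order all_algebra.
From mathcomp Require Import monoid finmap.
From mathcomp Require Import all_classical all_reals all_analysis.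
Set Implicit Arguments. Unset Strict Implicit. Unset Printing Implicit Defensive.
Import Order.TTheory GRing.Theory Num.Theory.

Local Open Scope fset_scope.

Section GroupGrowth.
Variable G : groupType.

Definition symmetrize (S : {fset G}) : {fset G} :=
  S `|` [fset (x^-1)%g | x in S].

Definition symmetric_set (U : {fset G}) : Prop :=
  forall u, u \in U -> (u^-1)%g \in U.

Fixpoint fset_pow (U : {fset G}) (n : nat) : {fset G} :=
  match n with
  | 0 => [fset 1%g]
  | n'.+1 => [fset (x * y)%g | x in fset_pow U n', y in U]
  end.

Definition ball (S : {fset G}) (n : nat) : {fset G} :=
  \big[fsetU/fset0]_(k < n.+1) fset_pow (symmetrize S) k.

Definition generates (S : {fset G}) : Prop :=
  forall g : G, exists n, g \in ball S n.

Definition finitely_generated : Prop := exists S : {fset G}, generates S.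

Variable R : realType.
Local Open Scope ring_scope.

Definition growth_rate (S : {fset G}) : R :=
  limn (fun n : nat => (#|` ball S n|%:R : R) `^ (n%:R)^-1).

Definition min_growth_rate : R :=
  inf [set growth_rate S | S in [set S : {fset G} | generates S]]%classic.

Definition uniform_exponential_growth : Prop := 1 < min_growth_rate.

End GroupGrowth.

(* Main.v *)
Require Import Defs.
From HB Require Import structures.
From mathcomp Require Import all_boot all_order all_algebra.
From mathcomp Require Import monoid finmap.
From mathcomp Require Import all_classical all_reals all_analysis.
From mathcomp Require Import ring lra.
Import Order.TTheory GRing.Theory Num.Theory.
Import numFieldNormedType.Exports.

Section S.
Local Open Scope fset_scope.
Variable G : groupType.
Implicit Types A B C D S U V : {fset G}.
Definition mulset (A B : {fset G}) : {fset G} := [fset (x * y)%g | x in A, y in B].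

Lemma card_mulset A B : (#|` mulset A B| <= #|` A| * #|` B|)%N.
Proof.
rewrite /mulset unlock /= size_seq_fset (leq_trans (size_undup _)) //.
rewrite size_allpairs_dep.
rewrite /=; elim: (enum_fset A) => [|a s IH] //=.
by rewrite mulSn leq_add2l.
Qed.

Lemma mulsetP A B x : reflect (exists a, exists2 b, (a \in A) /\ (b \in B) & x = (a * b)%g) (x \in mulset A B).
Proof.
apply: (iffP (imfset2P _ _ _ _ _)).
  by move=> [a aA [b bB ->]]; exists a, b.
by move=> [a [b [aA bB] ->]]; exists a => //; exists b.
Qed.

Lemma in_mulset A B a b : a \in A -> b \in B -> (a * b)%g \in mulset A B.
Proof. by move=> aA bB; apply/mulsetP; exists a, b. Qed.

Lemma mulsetA A B C : mulset (mulset A B) C = mulset A (mulset B C).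
Proof.
apply/fsetP => x; apply/mulsetP/mulsetP.
  move=> [y [c [/mulsetP [a [b [aA bB] ->]] cC] ->]].
  by exists a, (b * c)%g; [split=> //; apply: in_mulset| rewrite mulgA].
move=> [a [y [aA /mulsetP [b [c [bB cC] ->]]] ->]].
by exists (a * b)%g, c; [split=> //; apply: in_mulset| rewrite mulgA].
Qed.

Lemma mulset1 A : mulset A [fset 1%g] = A.
Proof.
apply/fsetP => x; apply/mulsetP/idP.
  by move=> [a [b [aA]]]; rewrite in_fset1 => /eqP -> ->; rewrite mulg1.
by move=> xA; exists x, 1%g; rewrite ?mulg1 ?in_fset1.
Qed.

Lemma mul1set A : mulset [fset 1%g] A = A.
Proof.
apply/fsetP => x; apply/mulsetP/idP.
  by move=> [a [b []]]; rewrite in_fset1 => /eqP -> bA ->; rewrite mul1g.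
by move=> xA; exists 1%g, x; rewrite ?mul1g ?in_fset1.
Qed.

Lemma powS U n : fset_pow U n.+1 = mulset (fset_pow U n) U.
Proof. by []. Qed.

Lemma pow_add U a b : fset_pow U (a + b) = mulset (fset_pow U a) (fset_pow U b).
Proof.
elim: b => [|b IH]; first by rewrite addn0 /= mulset1.
by rewrite addnS !powS IH mulsetA.
Qed.

Lemma pow1 U : fset_pow U 1 = U.
Proof. by rewrite powS mul1set. Qed.

Lemma pow_sym U n : symmetric_set U -> symmetric_set (fset_pow U n).
Proof.
move=> sU; elim: n => [|n IH] x.
  by rewrite /= !in_fset1 => /eqP ->; rewrite invg1.
rewrite powS => /mulsetP [a [b [aA bB] ->]].
rewrite invgM -powS -add1n pow_add pow1.
by apply: in_mulset; [apply: sU| apply: IH].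
Qed.

Lemma mulset_mono A B C D : A `<=` C -> B `<=` D -> mulset A B `<=` mulset C D.
Proof.
move=> /fsubsetP AC /fsubsetP BD; apply/fsubsetP => x /mulsetP [a [b [aA bB] ->]].
by apply: in_mulset; [apply: AC| apply: BD].
Qed.

Lemma pow_mono U V n : U `<=` V -> fset_pow U n `<=` fset_pow V n.
Proof.
move=> UV; elim: n => [|n IH] //=.
by rewrite -!/(mulset _ _) mulset_mono.
Qed.

Lemma sym_sub S : S `<=` symmetrize S.
Proof. exact: fsubsetUl. Qed.

Lemma sym_sym S : symmetric_set (symmetrize S).
Proof.
move=> x; rewrite /symmetrize !in_fsetU => /orP [xS|/imfsetP [y yS ->]].
  by apply/orP; right; apply/imfsetP; exists x.
by rewrite invgK yS.
Qed.

Lemma ballP S n x : reflect (exists2 j, (j <= n)%N & x \in fset_pow (symmetrize S) j) (x \in Defs.ball S n).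
Proof.
rewrite /Defs.ball. apply: (iffP (bigfcupP _ _ _ _)).
  by move=> [j _ xj]; exists j => //; rewrite -ltnS ltn_ord.
move=> [j jn xj]; exists (Ordinal (n:=n.+1) (m:=j) jn) => //.
by rewrite mem_index_enum.
Qed.

Lemma one_ball S n : 1%g \in Defs.ball S n.
Proof. by apply/ballP; exists 0%N => //=; rewrite in_fset1. Qed.

Lemma ball_mono S m n : (m <= n)%N -> Defs.ball S m `<=` Defs.ball S n.
Proof.
move=> mn; apply/fsubsetP => x /ballP [j jm xj]; apply/ballP; exists j => //.
exact: leq_trans mn.
Qed.

Lemma ball_sym S k : symmetric_set (Defs.ball S k).
Proof.
move=> x /ballP [j jk xj]; apply/ballP; exists j => //.
exact: (pow_sym _ j (sym_sym S) x xj).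
Qed.

Lemma pow_ball S k n : fset_pow (Defs.ball S k) n `<=` Defs.ball S (k * n).
Proof.
elim: n => [|n IH]; first by apply/fsubsetP => x /=; rewrite in_fset1 => /eqP ->; apply: one_ball.
apply/fsubsetP => x; rewrite powS => /mulsetP [y [u [/(fsubsetP IH) yB uB] ->]].
move: yB uB => /ballP [j1 j1k y1] /ballP [j2 j2k u2].
apply/ballP; exists (j1 + j2)%N; last by rewrite pow_add; apply: in_mulset.
by rewrite mulnS addnC leq_add.
Qed.

Lemma ball_add S m n : Defs.ball S (m + n) `<=` mulset (Defs.ball S m) (Defs.ball S n).
Proof.
apply/fsubsetP => x /ballP [j jmn xj].
move: xj; have -> : j = (minn j m + (j - minn j m))%N by rewrite subnKC // geq_minl.
rewrite pow_add => /mulsetP [a [b [aA bB] ->]].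
apply: in_mulset; apply/ballP.
  by exists (minn j m) => //; rewrite geq_minr.
exists (j - minn j m)%N => //.
rewrite leq_subLR; move: jmn; case: (leqP j m) => jm.
  by move=> _; rewrite leq_addr.
by [].
Qed.

Lemma card_ball_add S m n : (#|` Defs.ball S (m + n)| <= #|` Defs.ball S m| * #|` Defs.ball S n|)%N.
Proof. exact: leq_trans (fsubset_leq_card (ball_add S m n)) (card_mulset _ _). Qed.

Lemma card_ball_mono S m n : (m <= n)%N -> (#|` Defs.ball S m| <= #|` Defs.ball S n|)%N.
Proof. by move=> mn; apply: fsubset_leq_card; apply: ball_mono. Qed.

Lemma card_ball_gt0 S n : (0 < #|` Defs.ball S n|)%N.
Proof. by rewrite cardfs_gt0; apply/fset0Pn; exists 1%g; apply: one_ball. Qed.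

Lemma ball_sub_gen S k m : (0 < k)%N -> Defs.ball S m `<=` Defs.ball (Defs.ball S k) m.
Proof.
move=> k0; apply/fsubsetP => x /ballP [j jm xj]; apply/ballP; exists j => //.
apply: (fsubsetP (pow_mono _ _ j _)) xj.
apply/fsubsetP => y ys; apply: (fsubsetP (sym_sub _)); apply/ballP.
by exists 1%N => //; rewrite pow1.
Qed.

Lemma gen_ball S k : (0 < k)%N -> generates S -> generates (Defs.ball S k).
Proof.
move=> k0 gS g; have [m gm] := gS g; exists m.
exact: (fsubsetP (ball_sub_gen S k m k0)).
Qed.

Lemma ball_stuck S k : Defs.ball S k.+1 `<=` Defs.ball S k -> forall m, Defs.ball S m `<=` Defs.ball S k.
Proof.
move=> stk; elim=> [|m IH]; first by apply: ball_mono.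
apply/fsubsetP => x /ballP [j]; rewrite leq_eqVlt => /orP [/eqP ->|jm] xj; last first.
  by apply: (fsubsetP IH); apply/ballP; exists j.
move: xj; rewrite powS => /mulsetP [y [u [ym uS] ->]].
have /(fsubsetP IH) /ballP [i ik yi] : y \in Defs.ball S m by apply/ballP; exists m.
apply: (fsubsetP stk); apply/ballP; exists i.+1; first by [].
by rewrite powS; apply: in_mulset.
Qed.

Lemma card_ball_grow S : generates S -> ~ (exists A : {fset G}, forall g : G, g \in A) ->
  forall k, (k < #|` Defs.ball S k|)%N.
Proof.
move=> gS nfin; elim=> [|k IH]; first exact: card_ball_gt0.
apply: (leq_ltn_trans IH); apply: fproper_ltn_card.
rewrite fproperE ball_mono //=.
apply/negP => stk.
apply: nfin; exists (Defs.ball S k) => g.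
have [m gm] := gS g.
exact: (fsubsetP (@ball_stuck S k stk m)) gm.
Qed.
End S.

Section Fek.
Local Open Scope classical_set_scope.
Local Open Scope ring_scope.
Variable R : realType.
Variable c : nat -> nat.
Hypothesis c_gt0 : forall n, (0 < c n)%N.
Hypothesis c0 : (c 0 <= 1)%N.
Hypothesis c_mono : forall m n, (m <= n)%N -> (c m <= c n)%N.
Hypothesis c_sub : forall m n, (c (m + n) <= c m * c n)%N.

Definition lc n : R := ln (c n)%:R.
Definition xs n : R := lc n / n%:R.

Lemma lc_ge0 n : 0 <= lc n.
Proof. by apply: ln_ge0; rewrite ler1n c_gt0. Qed.

Lemma xs_ge0 n : 0 <= xs n.
Proof. by rewrite /xs divr_ge0 ?lc_ge0. Qed.

Lemma c_pow m j : (c (j * m) <= c m ^ j)%N.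
Proof.
elim: j => [|j IH]; first by rewrite mul0n expn0 c0.
by rewrite mulSn expnS (leq_trans (c_sub _ _)) // leq_mul2l IH orbT.
Qed.

Lemma xs_bound m n : (0 < m)%N -> (0 < n)%N -> xs n <= xs m + lc m / n%:R.
Proof.
move=> m0 n0; set q := (n %/ m)%N.
have h1 : (c n <= c m ^ q.+1)%N.
  apply: leq_trans (c_pow m q.+1); apply: c_mono; exact: ltnW (ltn_ceil n m0).
have h2 : (q.+1 * m <= n + m)%N by rewrite mulSn addnC leq_add2r leq_trunc_div.
have H1 : lc n <= lc m * q.+1%:R.
  rewrite /lc mulr_natr -lnXn ?ltr0n ?c_gt0 // -natrX ler_ln ?posrE ?ltr0n ?c_gt0 ?expn_gt0 ?c_gt0 //.
  by rewrite ler_nat.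
have H2 : q.+1%:R * m%:R <= n%:R + m%:R :> R by rewrite -natrM -natrD ler_nat.
have L0 := lc_ge0 m.
have M0 : 0 < m%:R :> R by rewrite ltr0n.
have N0 : 0 < n%:R :> R by rewrite ltr0n.
have H3 : lc n * m%:R <= lc m * (n%:R + m%:R) by nra.
rewrite /xs (_ : lc n / n%:R = (lc n * m%:R) / (m%:R * n%:R)); last first.
  by field; apply/andP; split; rewrite gt_eqF.
rewrite (_ : lc m / m%:R + lc m / n%:R = (lc m * (n%:R + m%:R)) / (m%:R * n%:R)); last first.
  by field; apply/andP; split; rewrite gt_eqF.
by apply: ler_wpM2r => //; rewrite invr_ge0 mulr_ge0 // ltW.
Qed.

Definition Ex : set R := [set xs n | n in [set n | (0 < n)%N]].

Lemma Ex_has_inf : has_inf Ex.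
Proof.
split; first by exists (xs 1); exists 1%N.
by exists 0 => _ [n _ <-]; apply: xs_ge0.
Qed.

Lemma xs_cvg : xs @ \oo --> inf Ex.
Proof.
apply/cvgrPdist_lt => e e0.
have e20 : 0 < e / 2 by rewrite divr_gt0.
have [_ [m m0 <-] xm] := inf_adherent e20 Ex_has_inf.
exists (Num.truncn (2 * lc m / e)).+1 => // n /= Nn.
have n0 : (0 < n)%N by apply: leq_trans Nn.
have lb : inf Ex <= xs n by apply: (ge_inf (proj2 Ex_has_inf)); exists n.
have ub := xs_bound m n m0 n0.
have N0 : 0 < n%:R :> R by rewrite ltr0n.
have hN : 2 * lc m / e < n%:R.
  apply: lt_le_trans (truncnS_gt _) _; by rewrite ler_nat.
have hL : lc m / n%:R < e / 2.
  move: hN; rewrite ltr_pdivrMr // => hN.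
  rewrite ltr_pdivrMr //; nra.
rewrite distrC ger0_norm ?subr_ge0 //.
lra.
Qed.

Lemma growth_lb (d : R) k : (forall n, (k <= n)%N -> d <= xs n) ->
  expR d <= limn (fun n : nat => ((c n)%:R : R) `^ (n%:R)^-1).
Proof.
move=> hd.
have eqb : (fun n : nat => ((c n)%:R : R) `^ (n%:R)^-1) = expR \o xs.
  apply: funext => n /=; rewrite /powR pnatr_eq0 gtn_eqF ?c_gt0 // /xs /lc mulrC.
  by [].
have hc : (expR \o xs) @ \oo --> expR (inf Ex).
  exact: (continuous_cvg _ (@continuous_expR R _) xs_cvg).
rewrite eqb (cvg_lim (@Rhausdorff R) hc) ler_expR.
rewrite -(cvg_lim (@Rhausdorff R) xs_cvg).
apply: limr_ge; first by apply/cvg_ex; exists (inf Ex); apply: xs_cvg.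
by exists k => // n /= kn; apply: hd.
Qed.
End Fek.

Local Open Scope ring_scope.

Theorem lemma2p6 (G : groupType) (R : realType) (alpha beta : R) :
  finitely_generated G ->
  0 < alpha -> 0 < beta ->
  (forall U : {fset G}, symmetric_set U -> generates U ->
     forall n : nat,
       (alpha * #|` U|%:R) `^ (beta * n%:R) <= (#|` fset_pow U n|%:R : R)) ->
  (exists A : {fset G}, (forall g : G, g \in A) /\ (#|` A|%:R : R) <= alpha^-1)
  \/ uniform_exponential_growth G R.
Proof.
move=> [S0 gS0] a0 b0 H.
have [[A hA]|nfin] := pselect (exists A : {fset G}, forall g, g \in A).
  left; exists A; split => //.
  have symA : symmetric_set A by move=> u _; exact: hA.
  have genA : generates A.
    move=> g; exists 1%N; apply/ballP; exists 1%N => //; rewrite pow1.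
    by rewrite /symmetrize in_fsetU hA.
  have hb n : (alpha * #|` A|%:R) `^ (beta * n%:R) <= (#|` A|%:R : R).
    apply: le_trans (H A symA genA n) _; rewrite ler_nat; apply: fsubset_leq_card.
    by apply/fsubsetP => x _; exact: hA.
  have Apos : 0 < #|` A|%:R :> R.
    by rewrite ltr0n cardfs_gt0; apply/fset0Pn; exists 1%g.
  rewrite -(ler_pM2l a0) mulfV ?gt_eqF //.
  set y := alpha * #|` A|%:R.
  rewrite leNgt; apply/negP => y1.
  have y0 : 0 < y by rewrite mulr_gt0.
  have ly : 0 < ln y by apply: ln_gt0.
  have bly : 0 < beta * ln y by rewrite mulr_gt0.
  set N := (Num.truncn (ln (#|` A|%:R : R) / (beta * ln y))).+1.
  have hN : ln (#|` A|%:R : R) / (beta * ln y) < N%:R by apply: truncnS_gt.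
  move: hN; rewrite ltr_pdivrMr // => hN.
  have := hb N.
  rewrite -ler_ln ?posrE ?powR_gt0 // ln_powR => hB.
  nra.
right.
rewrite /uniform_exponential_growth /min_growth_rate.
set k := (Num.truncn (2 / alpha)).+1.
have k0 : (0 < k)%N by [].
have hk : 2 / alpha < k%:R by apply: truncnS_gt.
have K0 : 0 < k%:R :> R by rewrite ltr0n.
have l2 : 0 < ln (2 : R) by apply: ln_gt0; rewrite ltr1n.
set d := beta * ln 2 / (2 * k%:R).
have d0 : 0 < d by rewrite /d divr_gt0 ?mulr_gt0.
apply: (@lt_le_trans _ _ (expR d)); first by rewrite expR_gt1.
apply: lb_le_inf; first by exists (growth_rate R S0); exists S0.
move=> _ [S gS <-].
rewrite /growth_rate.
have c0 : (#|` Defs.ball S 0| <= 1)%N.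
  rewrite -(cardfs1 (1%g : G)); apply: fsubset_leq_card; apply/fsubsetP => x /ballP [j].
  by rewrite leqn0 => /eqP ->.
apply: (@growth_lb R (fun n => #|` Defs.ball S n|) (@card_ball_gt0 G S) c0
   (@card_ball_mono G S) (@card_ball_add G S) d k).
move=> n kn.
set U := Defs.ball S k.
set q := (n %/ k)%N.
have q0 : (0 < q)%N by rewrite divn_gt0.
have hU : 2 <= alpha * #|` U|%:R.
  have hkU : k%:R <= #|` U|%:R :> R by rewrite ler_nat ltnW //; exact: card_ball_grow G S gS nfin k.
  move: hk; rewrite ltr_pdivrMr // => hk.
  nra.
have hkq : (k * q <= n)%N by rewrite mulnC leq_trunc_div.
have hsub : (fset_pow U q `<=` Defs.ball S n)%fset.
  exact: fsubset_trans (pow_ball G S k q) (ball_mono G S _ _ hkq).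
have hc : (alpha * #|` U|%:R) `^ (beta * q%:R) <= (#|` Defs.ball S n|%:R : R).
  apply: le_trans (H U (@ball_sym G S k) (gen_ball G S k k0 gS) q) _.
  by rewrite ler_nat fsubset_leq_card.
have bq : 0 <= beta * q%:R by rewrite mulr_ge0 // ltW.
have h2 : (2 : R) `^ (beta * q%:R) <= (alpha * #|` U|%:R) `^ (beta * q%:R).
  apply: (ge0_ler_powR bq) => //; rewrite ?nnegrE //.
  by apply: le_trans hU.
have cn0 : 0 < #|` Defs.ball S n|%:R :> R by rewrite ltr0n card_ball_gt0.
have hl : beta * q%:R * ln 2 <= ln (#|` Defs.ball S n|%:R : R).
  rewrite -ln_powR ler_ln ?posrE ?powR_gt0 //.
  exact: le_trans h2 hc.
have hnq : n%:R <= 2 * k%:R * q%:R :> R.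
  rewrite -natrM -natrM ler_nat.
  apply: leq_trans (ltnW (ltn_ceil n k0)) _.
  by rewrite mulnAC leq_mul2r mul2n -addnn -addn1 leq_add2l q0 orbT.
have n0 : 0 < n%:R :> R by rewrite ltr0n (leq_trans k0 kn).
rewrite /xs /lc /d ler_pdivlMr // mulrAC ler_pdivrMr ?mulr_gt0 //.
have bl : 0 < beta * ln (2:R) by rewrite mulr_gt0.
have e1 : beta * ln 2 * n%:R <= beta * ln 2 * (2 * k%:R * q%:R) by rewrite ler_pM2l.
have k2 : 0 <= 2 * k%:R :> R by rewrite mulr_ge0 // ltW.
have e2 := ler_wpM2r k2 hl.
apply: le_trans e1 _.
suff -> : beta * ln 2 * (2 * k%:R * q%:R) = beta * q%:R * ln 2 * (2 * k%:R) by [].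
by ring.
Qed.
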